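(* Let $d\ge1$ be odd. In $\mathbb Q[l_1,l_2]$ (with $c_1=-(l_1+l_2)$, $c_2=l_1l_2$) the following identities hold: $$P_d=\Big(d^2c_2-\tfrac{d^2-1}{4}c_1^2\Big)P_{d-2},\quad R_{0,0}=\tfrac{d+1}{2}c_1\,P_{d-2},\quad R_{0,1}=-d\,P_{d-2},\quad R_{1,0}=d\,c_2\,P_{d-2},\quad R_{1,1}=\tfrac{1-d}{2}c_1\,P_{d-2}.$$
   Context: For $n\ge0$ let $P_{0,n}(X)=\prod_{j=0}^{n}\big(X+(n-j)l_1+jl_2\big)\in\mathbb Z[l_1,l_2][X]$, and set $P_{0,-1}:=1$. Put $c_1=-(l_1+l_2)$, $c_2=l_1l_2$, $P_d:=P_{0,d}\big(\tfrac{d+1}{2}c_1\big)$ and $P_{d-2}:=P_{0,d-2}\big(\tfrac{d-1}{2}c_1\big)$ (so $P_{-1}=1$). For $k=0,1$, divide $h^k\,P_{0,d-1}(H-h)\in\mathbb Z[l_1,l_2][H,h]$ by the monic polynomial $h^2-c_1h+c_2$ in $h$, obtaining the remainder $R_{k,0}(H)+R_{k,1}(H)\,h$ with $R_{k,j}(H)\in\mathbb Z[l_1,l_2][H]$; then define $R_{k,j}:=R_{k,j}\big(\tfrac{d+1}{2}c_1\big)$. *)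

(* Defs.v *)
From HB Require Import structures.
From mathcomp Require Import all_boot all_order all_algebra.
From mathcomp Require Import mpoly.
Set Implicit Arguments. Unset Strict Implicit. Unset Printing Implicit Defensive.
Import GRing.Theory.
Local Open Scope ring_scope.

Notation A := {mpoly rat[2]}.
Definition l1 : A := 'X_(@Ordinal 2 0 isT).
Definition l2 : A := 'X_(@Ordinal 2 1 isT).
Definition c1 : A := - (l1 + l2).
Definition c2 : A := l1 * l2.

Definition P0 (n : nat) : {poly A} :=
  \prod_(j < n.+1) ('X + ((n - j)%:R * l1 + j%:R * l2)%:P).

(* P0m m = P_{0,m-1}, with P_{0,-1} := 1. *)
Definition P0m (m : nat) : {poly A} := if m is m'.+1 then P0 m' else 1.

Definition Pd (d : nat) : A := (P0 d).[((d%:R + 1) / 2 : rat) *: c1].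
Definition Pdm2 (d : nat) : A := (P0m d.-1).[((d%:R - 1) / 2 : rat) *: c1].

(* The polynomial h^k P_{0,d-1}(H - h) in (A[H])[h]. *)
Definition HH : {poly {poly A}} := ('X : {poly A})%:P.
Definition hkP (k d : nat) : {poly {poly A}} :=
  'X ^+ k * (map_poly (fun a : A => a%:P%:P) (P0 d.-1)).[HH - 'X].
Definition divisor : {poly {poly A}} := 'X ^+ 2 - (c1%:P)%:P * 'X + (c2%:P)%:P.
(* remainder R_{k,0}(H) + R_{k,1}(H) h *)
Definition Rpoly (k d : nat) : {poly {poly A}} := hkP k d %% divisor.
Definition R (k j d : nat) : A := ((Rpoly k d)`_j).[((d%:R + 1) / 2 : rat) *: c1].

(* Main.v *)
Require Import Defs.
From HB Require Import structures.
From mathcomp Require Import all_boot all_order all_algebra.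
From mathcomp Require Import mpoly.
From mathcomp Require Import ring.
Import GRing.Theory.
Local Open Scope ring_scope.

Set Implicit Arguments. Unset Strict Implicit.

Definition G (R : comNzRingType) (a b : R) n y :=
  \prod_(j < n.+1) (y + ((n - j)%:R * a + j%:R * b)).

Lemma hornerG (R : comNzRingType) (a b : R) n y :
  (\prod_(j < n.+1) ('X + ((n - j)%:R * a + j%:R * b)%:P)).[y] = G a b n y.
Proof.
rewrite horner_prod; apply: eq_bigr => j _.
by rewrite hornerD hornerX hornerC.
Qed.

Lemma G_recl (R : comNzRingType) (a b : R) n y :
  G a b n.+1 y = (y + n.+1%:R * a) * G a b n (y + b).
Proof.
rewrite /G big_ord_recl /= subn0 mul0r addr0; congr (_ * _).
apply: eq_bigr => j _; rewrite /bump /= add1n subSS.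
rewrite -addrA; congr (_ + _); ring.
Qed.

Lemma G_recr (R : comNzRingType) (a b : R) n y :
  G a b n.+1 y = G a b n (y + a) * (y + n.+1%:R * b).
Proof.
rewrite /G big_ord_recr /= subnn mul0r add0r; congr (_ * _).
apply: eq_bigr => j _ /=.
have hj : (j <= n)%N by rewrite -ltnS.
rewrite subSn //.
rewrite -addrA; congr (_ + _); ring.
Qed.

Section Gen.
Variables (R : comNzRingType) (a b : R) (m : nat).
Definition y0 := (m.+1)%:R * - (a + b).
Definition Q := if m is m'.+1 then G a b (m'.*2.+1) (m%:R * - (a + b)) else 1.
Definition ta := y0 + (m.*2.+1)%:R * a.
Definition tb := y0 + (m.*2.+1)%:R * b.

Lemma F1 : G a b (m.*2) (y0 + a) = ta * Q.
Proof.
rewrite /Q /ta /y0; case: m => [|m'].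
  rewrite /G big_ord1 /=; ring.
rewrite doubleS G_recl; congr (_ * _).
  rewrite !mulrS. ring.
congr (G _ _ _ _); rewrite !mulrS; ring.
Qed.

Lemma F2 : G a b (m.*2) (y0 + b) = Q * tb.
Proof.
rewrite /Q /tb /y0; case: m => [|m'].
  rewrite /G big_ord1 /= double0 subnn !mul0r !mul1r addr0; ring.
rewrite doubleS G_recr; congr (_ * _).
  congr (G _ _ _ _); rewrite !mulrS; ring.
rewrite !mulrS; ring.
Qed.

Lemma F3 : G a b (m.*2.+1) y0 = ta * (Q * tb).
Proof. by rewrite G_recl F2. Qed.
End Gen.

Lemma final (R : idomainType) (a b : R) (m : nat) (r00 r01 r10 r11 : R) :
  b - a != 0 ->
  r00 + r01 * - a = ta a b m * Q a b m ->
  r00 + r01 * - b = Q a b m * tb a b m ->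
  r10 + r11 * - a = - a * (ta a b m * Q a b m) ->
  r10 + r11 * - b = - b * (Q a b m * tb a b m) ->
  [/\ r00 = (m.+1)%:R * - (a + b) * Q a b m,
      r01 = - (m.*2.+1)%:R * Q a b m,
      r10 = (m.*2.+1)%:R * (a * b) * Q a b m
    & r11 = - (m%:R * - (a + b)) * Q a b m].
Proof.
rewrite /ta /tb /y0; set q := Q a b m => hba h0a h0b h1a h1b.
have e01 : r01 = - (m.*2.+1)%:R * q.
  apply: (mulfI hba); apply/eqP; rewrite -subr_eq0; apply/eqP.
  have -> : (b - a) * r01 - (b - a) * (- (m.*2.+1)%:R * q) =
     (r00 + r01 * - a - (m.+1%:R * - (a + b) + m.*2.+1%:R * a) * q)
   - (r00 + r01 * - b - q * (m.+1%:R * - (a + b) + m.*2.+1%:R * b)).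
    rewrite -!muln2 !mulrS !natrM; ring.
  by rewrite h0a h0b !subrr.
have e11 : r11 = - (m%:R * - (a + b)) * q.
  apply: (mulfI hba); apply/eqP; rewrite -subr_eq0; apply/eqP.
  have -> : (b - a) * r11 - (b - a) * (- (m%:R * - (a + b)) * q) =
     (r10 + r11 * - a - - a * ((m.+1%:R * - (a + b) + m.*2.+1%:R * a) * q))
   - (r10 + r11 * - b - - b * (q * (m.+1%:R * - (a + b) + m.*2.+1%:R * b))).
    rewrite -!muln2 !mulrS !natrM; ring.
  by rewrite h1a h1b !subrr.
split => //.
- apply/eqP; rewrite -subr_eq0; apply/eqP.
  have -> : r00 - m.+1%:R * - (a + b) * q =
     (r00 + r01 * - a - (m.+1%:R * - (a + b) + m.*2.+1%:R * a) * q)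
     + a * (r01 - - (m.*2.+1)%:R * q).
    rewrite -!muln2 !mulrS !natrM; ring.
  by rewrite h0a e01 !subrr mulr0 addr0.
- apply/eqP; rewrite -subr_eq0; apply/eqP.
  have -> : r10 - (m.*2.+1)%:R * (a * b) * q =
     (r10 + r11 * - a - - a * ((m.+1%:R * - (a + b) + m.*2.+1%:R * a) * q))
     + a * (r11 - - (m%:R * - (a + b)) * q).
    rewrite -!muln2 !mulrS !natrM; ring.
  by rewrite h1a e11 !subrr mulr0 addr0.
Qed.

Unset Implicit Arguments. Set Strict Implicit.

Lemma hkP_eval (k d : nat) (x z : A) :
  ((map_poly (horner_eval x) (hkP k d)).[z]) = z ^+ k * (P0 d.-1).[x - z].
Proof.
rewrite /hkP rmorphM /= hornerM map_polyXn hornerXn; congr (_ * _).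
rewrite -horner_map /= -map_poly_comp.
have -> : map_poly (map_poly (horner_eval x) \o (fun a : A => a%:P%:P)) (P0 d.-1)
   = (P0 d.-1)^:P.
  by apply: eq_map_poly => a /=; rewrite map_polyC /= horner_evalE hornerC.
rewrite -/(comp_poly _ _) horner_comp /HH rmorphB /= map_polyC map_polyX /=.
by rewrite hornerD hornerN hornerC hornerX horner_evalE hornerX.
Qed.

Lemma l1l2_neq : l2 - l1 != 0.
Proof.
apply/eqP => H.
have := congr1 (meval (fun i : 'I_2 => (i : nat)%:R : rat)) H.
rewrite mevalB /l1 /l2 !mevalXU /= meval0.
by move/eqP; rewrite subr0 oner_eq0.
Qed.

Lemma divisorE : divisor = ('X + (l1%:P)%:P) * ('X + (l2%:P)%:P).
Proof.
rewrite /divisor /c1 /c2 !rmorphN !rmorphD !rmorphM /=.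
move: (l1%:P%:P : {poly {poly A}}) (l2%:P%:P : {poly {poly A}}) => a b.
rewrite expr2 !mulrDl !mulrDr !mulNr opprK !addrA [_ * b]mulrC. congr (_ + _). by rewrite mulrDl (mulrC 'X b) -addrA (addrC (a * 'X)).
Qed.

Lemma divisor_monic : divisor \is monic.
Proof. rewrite divisorE monicMl; [exact: monicXaddC | exact: monicXaddC]. Qed.

Lemma size_divisor : size divisor = 3%N.
Proof.
have h0 : forall c, ('X + c%:P : {poly {poly A}}) != 0.
  by move=> c; rewrite -size_poly_eq0 size_XaddC.
rewrite divisorE (size_mul (h0 _) (h0 _)).
move: (l1%:P : {poly A}) (l2%:P : {poly A}) => a b.
by rewrite !size_XaddC.
Qed.

Lemma gen_eval (R : comNzRingType) (x z a b : R) :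
  (map_poly (horner_eval x) (('X + a%:P%:P) * ('X + b%:P%:P))).[z] = (z + a) * (z + b).
Proof.
rewrite rmorphM /= !rmorphD /= !map_polyX !map_polyC /= !horner_evalE !hornerC.
by rewrite hornerM !hornerD !hornerC hornerX.
Qed.

Lemma rem_eval (k d : nat) (x z : A) : (z + l1) * (z + l2) = 0 ->
  ((Rpoly k d)`_0).[x] + ((Rpoly k d)`_1).[x] * z =
  ((map_poly (horner_eval x) (hkP k d)).[z]).
Proof.
move=> hz.
rewrite [hkP k d](Pdiv.IdomainMonic.divp_eq divisor_monic) -/(Rpoly k d).
rewrite rmorphD rmorphM /= hornerD hornerM.
rewrite divisorE. rewrite gen_eval. rewrite hz.
rewrite mulr0 add0r.
have hs : (size (Rpoly k d) <= 2)%N.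
  have := ltn_modpN0 (hkP k d) (monic_neq0 divisor_monic).
  by rewrite size_divisor.
have hs' : (size (map_poly (horner_eval x) (Rpoly k d)) <= 2)%N.
  by apply: leq_trans hs; apply: size_poly.
rewrite (horner_coef_wide _ hs') !big_ord_recl big_ord0 /= !coef_map /=.
by rewrite !horner_evalE expr0 mulr1 expr1 addr0.
Qed.

Lemma ratE1 m : ((m.*2.+1%:R + 1) / 2 : rat) = m.+1%:R.
Proof. rewrite -muln2 !mulrS natrM; field; by []. Qed.
Lemma ratE2 m : ((m.*2.+1%:R - 1) / 2 : rat) = m%:R.
Proof. rewrite -muln2 !mulrS natrM; field; by []. Qed.
Lemma ratE3 m : ((1 - m.*2.+1%:R) / 2 : rat) = - m%:R.
Proof. rewrite -muln2 !mulrS natrM; field; by []. Qed.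
Lemma ratE4 m : ((((m.*2.+1) ^ 2)%:R - 1) / 4 : rat) = (m * m.+1)%:R.
Proof. rewrite -muln2 natrX !mulrS !natrM; field; by []. Qed.

Lemma scal_nat (n : nat) (c : A) : (n%:R : rat) *: c = n%:R * c.
Proof. by rewrite scaler_nat mulr_natl. Qed.

Lemma P0_eval n y : (P0 n).[y] = G l1 l2 n y.
Proof. exact: hornerG. Qed.

Theorem mainTheorem10 (d : nat) : odd d -> (0 < d)%N ->
  [/\ Pd d = ((d ^ 2)%:R * c2 - (((d ^ 2)%:R - 1) / 4 : rat) *: c1 ^+ 2) * Pdm2 d,
      R 0 0 d = (((d%:R + 1) / 2 : rat) *: c1) * Pdm2 d,
      R 0 1 d = - d%:R * Pdm2 d,
      R 1 0 d = d%:R * c2 * Pdm2 d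
    & R 1 1 d = (((1 - d%:R) / 2 : rat) *: c1) * Pdm2 d].
Proof.
move=> hodd _.
have hd : d = (d./2).*2.+1 by rewrite -[LHS]odd_double_half hodd add1n.
move: (d./2) hd => m ->.
have hx : ((m.*2.+1%:R + 1) / 2 : rat) *: c1 = y0 l1 l2 m.
  by rewrite ratE1 scal_nat.
have hP : Pdm2 m.*2.+1 = Q l1 l2 m.
  rewrite /Pdm2 /= ratE2 scal_nat; case: m {hx} => [|m'] /=.
    by rewrite hornerC.
  by rewrite P0_eval.
have hpd : Pd m.*2.+1 = ta l1 l2 m * (Q l1 l2 m * tb l1 l2 m).
  by rewrite /Pd hx P0_eval F3.
have hR : forall k z, (z + l1) * (z + l2) = 0 ->
    R k 0 m.*2.+1 + R k 1 m.*2.+1 * z = z ^+ k * G l1 l2 m.*2 (y0 l1 l2 m - z).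
  move=> k z hz; rewrite /R (rem_eval _ _ _ _ hz) hkP_eval /= hx P0_eval //.
have za : (- l1 + l1) * (- l1 + l2) = 0 by rewrite addNr mul0r.
have zb : (- l2 + l1) * (- l2 + l2) = 0 by rewrite addNr mulr0.
have h0a := hR 0%N _ za; have h0b := hR 0%N _ zb.
have h1a := hR 1%N _ za; have h1b := hR 1%N _ zb.
rewrite opprK F1 expr0 mul1r in h0a.
rewrite opprK F2 expr0 mul1r in h0b.
rewrite opprK F1 expr1 in h1a.
rewrite opprK F2 expr1 in h1b.
have [e00 e01 e10 e11] := final l1l2_neq h0a h0b h1a h1b.
rewrite hP hpd hx e00 e01 e10 e11 ratE4 ratE3 scaleNr !scal_nat; split => //.
rewrite /ta /tb /y0 /c1 /c2 -!muln2 !natrX !mulrS !natrM; ring.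
Qed.
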